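(* Let $H$ be a $d$-degenerate $r$-uniform hypergraph on $n$ vertices, let $\{c_v\}$ be a random local $k$-partition of $H$, and run the greedy procedure described in the context on $H$ and $\{c_v\}$. For $i\in[n]$ and $j\in[k]$ let $X_{ij}$ be the indicator of the event $j\in L(v_i)$, and let $Y_{ij}=1-X_{ij}$. Then: (i) for all $i\in[n]$ and $j\in[k]$, $\mathbb{E}[X_{ij}]\ge (1-1/k^r)^d$; (ii) for each $i\in[n]$, the variables $(Y_{ij})_{j\in[k]}$ are negatively correlated, i.e. for every $J\subseteq[k]$, $\mathbb{P}\big[\bigcap_{j\in J}\{Y_{ij}=1\}\big]\le\prod_{j\in J}\mathbb{P}[Y_{ij}=1]$.
   Context: For a vertex $v$, $E(v)$ is the set of edges containing $v$. A local $k$-partition of $H$ is a collection $\{c_v\}$ of maps $c_v:E(v)\to\{1,\dots,k\}$. A random local $k$-partition is obtained by choosing, for each edge $e=\{v_1,\dots,v_r\}$, the tuple $(c_{v_1}(e),\dots,c_{v_r}(e))$ uniformly at random from $[k]^r$, independently over edges. $H$ is $d$-degenerate if its vertices can be ordered $v_1,\dots,v_n$ so that each back degree $d_i^-$ (the degree of $v_i$ in the subhypergraph induced by $\{v_1,\dots,v_i\}$) is at most $d$. Greedy procedure: fix such an ordering; set $\varphi(v_1)=1$ (and $L(v_1)=[k]$); for $i=2,\dots,n$ in turn, let $L(v_i)=[k]\setminus\{c_{v_i}(e): e\ni v_i,\ e\subseteq\{v_1,\dots,v_i\},\ \varphi(u)=c_u(e)\text{ for all }u\in e\setminus\{v_i\}\}$,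 and set $\varphi(v_i)$ to be the smallest element of $L(v_i)$ if $L(v_i)\neq\emptyset$, and $\varphi(v_i)=1$ otherwise. *)

(* Defs.v *)
From mathcomp Require Import all_boot all_order all_algebra.
Set Implicit Arguments. Unset Strict Implicit. Unset Printing Implicit Defensive.
Import Order.TTheory GRing.Theory Num.Theory.

(* Vertices are 'I_n, labelled by their position in the fixed degeneracy
   ordering: vertex i : 'I_n is v_{i+1}.  Colours [k] are represented by
   'I_k (colour j : 'I_k is j+1; colour "1" is 0). *)

Definition uniform (n r : nat) (E : {set {set 'I_n}}) : Prop :=
  forall e, e \in E -> #|e| = r.

Definition back_edges (n : nat) (E : {set {set 'I_n}}) (i : 'I_n) : {set {set 'I_n}} :=
  [set e in E | (i \in e) && (e \subset [set u : 'I_n | u <= i])].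

Definition degenerate_order (n d : nat) (E : {set {set 'I_n}}) : Prop :=
  forall i : 'I_n, #|back_edges E i| <= d.

(* Sample space of a random local k-partition: a value c_v(e) for each pair
   (e, v); only pairs with e \in E and v \in e are used, the remaining
   coordinates are independent dummy uniform coordinates. *)
Definition lkp (n k : nat) := {ffun ({set 'I_n} * 'I_n) -> 'I_k}.

(* Colour j is blocked at vertex i (given the values s of phi on v_1..v_i-1) *)
Definition blocked (n k : nat) (E : {set {set 'I_n}}) (w : lkp n k)
  (s : seq nat) (i : 'I_n) (j : nat) : bool :=
  [exists e in back_edges E i,
     (nat_of_ord (w (e, i)) == j) &&
     [forall u in e, (u != i) ==> (nth 0 s u == nat_of_ord (w (e, u)))]].

Definition inL (n k : nat) (E : {set {set 'I_n}}) (w : lkp n k)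
  (s : seq nat) (i : 'I_n) (j : nat) : bool :=
  (j < k) && ((val i == 0) || ~~ blocked E w s i j).

(* phi(v_i): smallest element of L(v_i), or colour "1" (= 0) if empty *)
Definition choose_col (n k : nat) (E : {set {set 'I_n}}) (w : lkp n k)
  (s : seq nat) (i : 'I_n) : nat :=
  let m := find (inL E w s i) (iota 0 k) in if m < k then m else 0.

Fixpoint greedy_phis (n k : nat) (E : {set {set 'I_n}}) (w : lkp n k) (m : nat)
  : seq nat :=
  match m with
  | 0 => [::]
  | m'.+1 =>
      let s := greedy_phis E w m' in
      match insub m' : option 'I_n with
      | Some i => rcons s (choose_col E w s i)
      | None => rcons s 0
      end
  end.

Definition greedyL (n k : nat) (E : {set {set 'I_n}}) (w : lkp n k) (i : 'I_n)
  : {set 'I_k} :=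
  [set j : 'I_k | inL E w (greedy_phis E w i) i j].

Definition Pr (n k : nat) (A : {set lkp n k}) : rat :=
  (#|A|%:R / #|[set: lkp n k]|%:R)%R.

Definition eventX (n k : nat) (E : {set {set 'I_n}}) (i : 'I_n) (j : 'I_k)
  : {set lkp n k} := [set w | j \in greedyL E w i].

Definition eventY (n k : nat) (E : {set {set 'I_n}}) (i : 'I_n) (j : 'I_k)
  : {set lkp n k} := [set w | j \notin greedyL E w i].

(* Main.v *)
Require Import Defs.
From mathcomp Require Import all_boot all_order all_algebra.
From mathcomp Require Import zify ring lra.
Set Implicit Arguments. Unset Strict Implicit. Unset Printing Implicit Defensive.
Import Order.TTheory GRing.Theory Num.Theory.
Local Open Scope ring_scope.

Definition mixf (T K : finType) (D : pred T) (w h : {ffun T -> K}) : {ffun T -> K} :=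
  [ffun x => if D x then h x else w x].

Lemma mix_sum (T K : finType) (D : pred T) (F : {ffun T -> K} -> rat) :
  \sum_w \sum_h F (mixf D w h) = #|{ffun T -> K}|%:R * \sum_w F w.
Proof.
pose sg (p : {ffun T -> K} * {ffun T -> K}) := (mixf D p.1 p.2, mixf D p.2 p.1).
have sgK : involutive sg.
  move=> [w h]; rewrite /sg /=; congr pair; apply/ffunP=> x; rewrite !ffunE;
  by case: (D x).
rewrite pair_bigA /= (reindex_inj (inv_inj sgK)) /=.
have -> : \sum_p F (mixf D (sg p).1 (sg p).2) = \sum_(p : {ffun T -> K} * {ffun T -> K}) F p.1.
  apply: eq_bigr => -[w h] _; congr F; apply/ffunP=> x; rewrite /sg /= !ffunE.
  by case: (D x).
rewrite -(pair_bigA _ (fun w h => F w)) /= mulr_sumr; apply: eq_bigr => w _.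
by rewrite sumr_const mulr_natl.
Qed.

Lemma count_fixed (T : finType) (k : nat) (X : pred T) (f : T -> nat) :
  (forall x, X x -> f x < k)%N ->
  \sum_(h : {ffun T -> 'I_k}) ([forall x, X x ==> (val (h x) == f x)] : bool)%:R
  = (k%:R : rat) ^+ #|[predC X]|.
Proof.
move=> fk.
have -> : \sum_(h : {ffun T -> 'I_k}) ([forall x, X x ==> (val (h x) == f x)] : bool)%:R
   = \sum_(h : {ffun T -> 'I_k}) \prod_x ((X x ==> (val (h x) == f x)) : bool)%:R :> rat.
  apply: eq_bigr => h _.
  case: forallP => [H|H].
    by rewrite big1 // => x _; rewrite H.
  have [x Hx] : exists x, ~~ (X x ==> (val (h x) == f x)).
    apply/existsP; apply/negP => /existsP Hc; apply: H => x.
    by apply/negPn/negP => Hn; apply: Hc; exists x.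
  by rewrite (bigD1 x) //= (negbTE Hx) mul0r.
rewrite -(bigA_distr_bigA (fun x (c : 'I_k) => ((X x ==> (val c == f x)) : bool)%:R : rat)) /=.
rewrite (eq_bigr (fun x => if ~~ X x then k%:R else 1)); last first.
  move=> x _; case Xx: (X x) => /=.
    have lt := fk x Xx.
    rewrite (bigD1 (Ordinal lt)) //= eqxx big1 ?addr0 // => c.
    by rewrite -val_eqE /= => /negbTE ->.
  by rewrite sumr_const card_ord.
by rewrite -big_mkcond prodr_const.
Qed.

Lemma blocked_dep n k E (w w' : lkp n k) s (v : 'I_n) j :
  (forall e u, e \in back_edges E v -> w' (e,u) = w (e,u)) ->
  blocked E w' s v j = blocked E w s v j.
Proof.
move=> H; rewrite /blocked; apply: eq_existsb => e.
case He: (e \in back_edges E v) => //=.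
rewrite H //; congr andb; apply: eq_forallb => u; by rewrite H.
Qed.

Lemma phis_dep n k E (w w' : lkp n k) (i : nat) :
  (forall (v : 'I_n) e u, (v < i)%N -> e \in back_edges E v -> w' (e,u) = w (e,u)) ->
  forall m, (m <= i)%N -> greedy_phis E w' m = greedy_phis E w m.
Proof.
move=> H; elim=> [|m IH] Hm //=.
rewrite IH ?(ltnW Hm) //.
case: insubP => [v _ vm|_] //; congr rcons.
rewrite /choose_col /inL.
have Hb : forall j, blocked E w' (greedy_phis E w m) v j = blocked E w (greedy_phis E w m) v j.
  by move=> j; apply: blocked_dep => e u He; apply: H He; rewrite vm.
by rewrite (eq_find (a2 := fun j => (j < k)%N && ((val v == 0%N) || ~~ blocked E w (greedy_phis E w m) v j))) // => j; rewrite Hb.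
Qed.

Lemma phis_size n k E (w : lkp n k) m : size (greedy_phis E w m) = m.
Proof. by elim: m => //= m IH; case: insubP => *; rewrite size_rcons IH. Qed.

Lemma phis_all n k E (w : lkp n k) m : (0 < k)%N -> all (fun x => x < k)%N (greedy_phis E w m).
Proof.
move=> k0; elim: m => //= m IH; case: insubP => *; rewrite all_rcons IH andbT //.
by rewrite /choose_col; case: ifP.
Qed.

Lemma phis_lt n k E (w : lkp n k) m u : (0 < k)%N -> (u < m)%N ->
  (nth 0 (greedy_phis E w m) u < k)%N.
Proof.
move=> k0 um; have := phis_all E w m k0 => /all_nthP; apply.
by rewrite phis_size.
Qed.

Lemma split_opt (k : nat) (o : option 'I_k) (J : {set 'I_k}) (P : 'I_k -> bool) :
  ([forall j in J, (o == Some j) || P j] : bool)%:R =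
  ([forall j in J, P j] : bool)%:R +
  \sum_(j in J) (o == Some j)%:R * (([forall j' in J :\ j, P j'] : bool)%:R - ([forall j in J, P j] : bool)%:R) :> rat.
Proof.
case: o => [j0|]; last first.
  by rewrite big1 ?addr0 // => j _; rewrite mul0r.
have E0 : [forall j in J, (Some j0 == Some j) || P j] = [forall j in J :\ j0, P j].
  apply/forallP/forallP => H j; apply/implyP => Hj.
    move: Hj; rewrite in_setD1 => /andP [jn jJ].
    by move: (H j); rewrite jJ /= (inj_eq (@Some_inj _)) (eq_sym j0 j) (negbTE jn).
  case: (eqVneq j j0) => [->|jn]; first by rewrite eqxx.
  rewrite /= (inj_eq (@Some_inj _)) (eq_sym j0 j) (negbTE jn) /=.
  by move: (H j); rewrite in_setD1 jn Hj.
case J0: (j0 \in J).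
  rewrite (bigD1 j0) //= eqxx mul1r big1 ?addr0.
    by rewrite E0; ring.
  move=> j /andP [_ jn]; by rewrite (inj_eq (@Some_inj _)) (eq_sym j0 j) (negbTE jn) mul0r.
rewrite big1 ?addr0; last first.
  move=> j jJ; case: eqP => [[ej]|_]; last by rewrite mul0r.
  by rewrite ej jJ in J0.
congr (nat_of_bool _ )%:R; apply/forallP/forallP => H j; move: (H j); case jJ: (j \in J) => //=.
have jn : j0 != j by apply/eqP => ej; rewrite ej jJ in J0.
by rewrite (inj_eq (@Some_inj _)) (negbTE jn).
have jn : j0 != j by apply/eqP => ej; rewrite ej jJ in J0.
by rewrite (inj_eq (@Some_inj _)) (negbTE jn).
Qed.

Definition ball n k (s : seq nat) (i : 'I_n) (e : {set 'I_n}) (g : lkp n k) : option 'I_k :=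
  if [forall u in e, (u != i) ==> (nth 0 s u == g (e,u))] then Some (g (e,i)) else None.

Definition cnt n k (s : seq nat) (i : 'I_n) (J : {set 'I_k}) (S : {set {set 'I_n}}) : rat :=
  \sum_(g : lkp n k) ([forall j in J, [exists e in S, ball s i e g == Some j]] : bool)%:R.

Definition NN n k : rat := #|{ffun ({set 'I_n} * 'I_n) -> 'I_k}|%:R.

Definition dom_e n (e : {set 'I_n}) : pred ({set 'I_n} * 'I_n) := [pred x | x.1 == e].

Lemma ball_mix_in n k s i e (w h : lkp n k) : ball s i e (mixf (dom_e e) w h) = ball s i e h.
Proof.
rewrite /ball /dom_e ffunE /= eqxx; congr (if _ then _ else _).
by apply: eq_forallb => u; rewrite ffunE /= eqxx.
Qed.

Lemma ball_mix_out n k s i e e' (w h : lkp n k) : e' != e ->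
  ball s i e' (mixf (dom_e e) w h) = ball s i e' w.
Proof.
move=> ne; rewrite /ball /dom_e ffunE /= (negbTE ne); congr (if _ then _ else _).
by apply: eq_forallb => u; rewrite ffunE /= (negbTE ne).
Qed.

Lemma ball_count n k s (i : 'I_n) (e : {set 'I_n}) (j : 'I_k) : i \in e ->
  (forall u, u \in e -> u != i -> nth 0 s u < k)%N ->
  (\sum_(g : lkp n k) (ball s i e g == Some j)%:R) * (k%:R) ^+ #|e| = NN n k.
Proof.
move=> ie sk.
pose X : pred ({set 'I_n} * 'I_n) := [pred x | (x.1 == e) && (x.2 \in e)].
pose f (x : {set 'I_n} * 'I_n) := if x.2 == i then val j else nth 0 s x.2.
have fk : forall x, X x -> (f x < k)%N.
  move=> [e0 u] /andP [/= _ ue]; rewrite /f /=; case: eqP => [_|/eqP ne]; first exact: ltn_ord.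
  exact: sk.
have -> : \sum_(g : lkp n k) (ball s i e g == Some j)%:R
        = \sum_(g : lkp n k) ([forall x, X x ==> (val (g x) == f x)] : bool)%:R :> rat.
  apply: eq_bigr => g _; congr (nat_of_bool _)%:R.
  rewrite /ball; apply/idP/idP.
    case: ifP => // /forallP A /eqP [gj]; apply/forallP => -[e0 u].
    apply/implyP; rewrite /X /= => /andP [/eqP E0 ue]; subst e0.
    rewrite /f /=; case: (eqVneq u i) => [->|ne]; first by rewrite gj.
    by move: (A u); rewrite ue ne /= eq_sym.
  move=> /forallP A; have Ai := A (e, i); rewrite /X /f /= !eqxx ie /= in Ai.
  case: ifP => [_|/negP []].
    by rewrite (inj_eq (@Some_inj _)) -val_eqE.
  apply/forallP => u; apply/implyP => ue; apply/implyP => ne.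
  by move: (A (e, u)); rewrite /X /f /= eqxx ue /= (negbTE ne) eq_sym.
rewrite (count_fixed fk) /NN card_ffun card_ord natrX -exprD; congr (_ ^+ _).
rewrite addnC.
have -> : #|e| = #|X|.
  rewrite -(card_imset _ (fun a b (h : (e, a) = (e, b)) => f_equal snd h)).
  apply: eq_card => -[e0 u]; rewrite /X /= inE; apply/imsetP/andP.
    by move=> [v ve [-> ->]]; split => //=.
  by move=> [/= /eqP -> ue]; exists u.
by rewrite cardC.
Qed.

Lemma ball_count' n k s (i : 'I_n) (e : {set 'I_n}) (j : 'I_k) : (0 < k)%N -> i \in e ->
  (forall u, u \in e -> u != i -> nth 0 s u < k)%N ->
  \sum_(g : lkp n k) (ball s i e g == Some j)%:R = NN n k / (k%:R) ^+ #|e|.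
Proof.
move=> k0 ie sk; rewrite -(ball_count j ie sk) mulfK //.
by rewrite expf_neq0 // pnatr_eq0 -lt0n.
Qed.

Lemma cnt_step n k s (i : 'I_n) (e : {set 'I_n}) (S : {set {set 'I_n}}) (J : {set 'I_k}) : (0 < k)%N -> e \notin S -> i \in e ->
  (forall u, u \in e -> u != i -> nth 0 s u < k)%N ->
  NN n k * cnt s i J (e |: S) = NN n k * cnt s i J S +
     NN n k / (k%:R) ^+ #|e| * \sum_(j in J) (cnt s i (J :\ j) S - cnt s i J S).
Proof.
move=> k0 eS ie sk.
pose q (w : lkp n k) (J' : {set 'I_k}) :=
  ([forall j in J', [exists e' in S, ball s i e' w == Some j]] : bool)%:R : rat.
rewrite /cnt /NN -(mix_sum (dom_e e) (fun g : lkp n k => ([forall j in J, [exists e0 in e |: S, ball s i e0 g == Some j]] : bool)%:R)).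
have H1 : forall w h : lkp n k,
   ([forall j in J, [exists e0 in e |: S, ball s i e0 (mixf (dom_e e) w h) == Some j]] : bool)%:R
   = q w J + \sum_(j in J) (ball s i e h == Some j)%:R * (q w (J :\ j) - q w J).
  move=> w h; rewrite -split_opt; congr (nat_of_bool _)%:R.
  apply: eq_forallb => j; congr (_ ==> _).
  apply/existsP/orP.
    move=> [e0 /andP [He0 Hb]]; move: He0; rewrite in_setU1 => /orP [/eqP E0|e0S].
      by left; rewrite E0 ball_mix_in in Hb.
    have ne : e0 != e by apply/eqP => E0; rewrite -E0 e0S in eS.
    by right; apply/existsP; exists e0; rewrite e0S -(ball_mix_out s i w h ne) Hb.
  move=> [Hb|/existsP [e0 /andP [e0S Hb]]].
    by exists e; rewrite setU11 ball_mix_in.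
  have ne : e0 != e by apply/eqP => E0; rewrite -E0 e0S in eS.
  by exists e0; rewrite in_setU1 e0S orbT ball_mix_out.
rewrite (eq_bigr (fun w => \sum_h (q w J + \sum_(j in J) (ball s i e h == Some j)%:R * (q w (J :\ j) - q w J)))); last first.
  by move=> w _; apply: eq_bigr => h _; rewrite H1.
have H2 : forall w : lkp n k, \sum_h (q w J + \sum_(j in J) (ball s i e h == Some j)%:R * (q w (J :\ j) - q w J))
   = #|{ffun ({set 'I_n} * 'I_n) -> 'I_k}|%:R * q w J + NN n k / (k%:R) ^+ #|e| * \sum_(j in J) (q w (J :\ j) - q w J).
  move=> w; rewrite big_split /= sumr_const exchange_big /= mulr_sumr mulr_natl; congr (_ + _).
  apply: eq_bigr => j _; by rewrite -mulr_suml ball_count'.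
rewrite (eq_bigr _ (fun w _ => H2 w)) big_split /= -!mulr_sumr; congr (_ + _ * _).
rewrite exchange_big /=; apply: eq_bigr => j _; by rewrite sumrB.
Qed.

Lemma NN_gt0 n k : (0 < k)%N -> 0 < NN n k.
Proof. by move=> k0; rewrite /NN ltr0n card_ffun card_ord expn_gt0 k0. Qed.

Lemma cnt_set0 n k s (i : 'I_n) (S : {set {set 'I_n}}) : cnt s i (set0 : {set 'I_k}) S = NN n k.
Proof.
rewrite /cnt /NN (eq_bigr (fun _ => 1)) ?sumr_const //.
move=> g _; have -> // : [forall j in (set0 : {set 'I_k}), [exists e in S, ball s i e g == Some j]].
by apply/forallP => j; rewrite in_set0.
Qed.

Lemma cnt_Snil n k s (i : 'I_n) (J : {set 'I_k}) : J != set0 -> cnt s i J set0 = 0.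
Proof.
case/set0Pn => j jJ; rewrite /cnt big1 // => g _.
case: forallP => // /(_ j); rewrite jJ /= => /existsP [e]; by rewrite in_set0.
Qed.

Lemma cnt_step' n k s (i : 'I_n) (e : {set 'I_n}) (S : {set {set 'I_n}}) (J : {set 'I_k}) :
  (0 < k)%N -> e \notin S -> i \in e ->
  (forall u, u \in e -> u != i -> nth 0 s u < k)%N ->
  cnt s i J (e |: S) = cnt s i J S +
     1 / (k%:R) ^+ #|e| * \sum_(j in J) (cnt s i (J :\ j) S - cnt s i J S).
Proof.
move=> k0 eS ie sk; apply: (mulfI (lt0r_neq0 (NN_gt0 n k0))).
by rewrite (cnt_step J k0 eS ie sk) mulrDr mulrA mul1r.
Qed.

Lemma binom2 (x y : rat) t : 0 <= x -> 0 <= y ->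
  x ^+ t.+1 + t.+1%:R * x ^+ t * y <= (x + y) ^+ t.+1.
Proof.
move=> x0 y0; elim: t => [|t IH]; first by rewrite expr0 !expr1 mulr1 mul1r.
rewrite (exprS (x + y)).
have h1 : 0 <= x + y by rewrite addr_ge0.
apply: le_trans (ler_wpM2l h1 IH).
have xt : 0 <= x ^+ t by rewrite exprn_ge0.
rewrite !exprS -!natr1 /= -subr_ge0.
set T := (t%:R : rat). set X := x ^+ t.
have T0 : 0 <= T by rewrite /T ler0n.
have -> : (x + y) * (x * X + (T + 1) * X * y) - (x * (x * X) + (T + 1 + 1) * (x * X) * y)
   = (T + 1) * X * (y * y) by ring.
by rewrite !mulr_ge0 // addr_ge0.
Qed.

Lemma core n k s (i : 'I_n) r (BE : {set {set 'I_n}}) : (0 < k)%N ->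
  (forall e, e \in BE -> [/\ i \in e, #|e| = r & forall u, u \in e -> u != i -> (nth 0 s u < k)%N]) ->
  forall S : {set {set 'I_n}}, S \subset BE ->
  (forall J : {set 'I_k}, cnt s i J S <= NN n k * (1 - (1 - 1 / (k%:R) ^+ r) ^+ #|S|) ^+ #|J|) /\
  (forall j : 'I_k, cnt s i [set j] S = NN n k * (1 - (1 - 1 / (k%:R) ^+ r) ^+ #|S|)).
Proof.
move=> k0 HB S; move Hm: #|S| => m; elim: m S Hm => [|m IH] S Hm SB.
  move/eqP: Hm; rewrite cards_eq0 => /eqP ->; rewrite expr0 subrr; split.
    move=> J; case: (eqVneq J set0) => [->|J0]; first by rewrite cnt_set0 cards0 expr0 mulr1.
    by rewrite cnt_Snil // mulr_ge0 // ?ler0n // exprn_ge0.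
  by move=> j; rewrite cnt_Snil ?mulr0 //; apply/set0Pn; exists j; rewrite set11.
have [e eS] : exists e, e \in S by apply/set0Pn; rewrite -card_gt0 Hm.
have [ie er sk] := HB e (subsetP SB e eS).
set S0 := S :\ e.
have HS : S = e |: S0 by rewrite setD1K.
have eS0 : e \notin S0 by rewrite setD11.
have Hm0 : #|S0| = m by move: Hm; rewrite (cardsD1 e S) eS add1n => -[].
have [IH1 IH2] := IH S0 Hm0 (subset_trans (subD1set S e) SB).
have r0 : (0 < r)%N by rewrite -er card_gt0; apply/set0Pn; exists i.
set p : rat := 1 / (k%:R) ^+ r.
have kr0 : 0 < (k%:R : rat) ^+ r by rewrite exprn_gt0 // ltr0n.
have p0 : 0 <= p by rewrite /p divr_ge0 // ltW.
have p1 : p <= 1 by rewrite /p ler_pdivrMr // mul1r exprn_ege1 // ler1n.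
set b : rat := 1 - (1 - p) ^+ m.
have b0 : 0 <= b by rewrite /b subr_ge0 exprn_ile1 // ?subr_ge0 // lerBlDr lerDl.
have b1 : b <= 1 by rewrite /b lerBlDr lerDl exprn_ge0 // subr_ge0.
have N0 := NN_gt0 n k0.
have Hb' : 1 - (1 - p) ^+ m.+1 = b + p * (1 - b) by rewrite exprS /b; ring.
rewrite Hb' HS; split; last first.
  move=> j; rewrite (cnt_step' _ k0 eS0 ie sk) big_set1 setDv cnt_set0 IH2 er.
  by rewrite /b /p; ring.
move=> J; case: (eqVneq J set0) => [->|J0].
  by rewrite cnt_set0 cards0 expr0 mulr1.
have : (0 < #|J|)%N by rewrite card_gt0.
case Ht: #|J| => [//|t] _.
rewrite (cnt_step' _ k0 eS0 ie sk) er -/p sumrB sumr_const Ht.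
have tk : (t.+1%:R : rat) * p <= 1.
  rewrite /p mul1r ler_pdivrMr // mul1r.
  have : (t.+1 <= k ^ r)%N.
    apply: leq_trans (_ : (k <= k ^ r)%N).
      by rewrite -Ht; apply: leq_trans (max_card J) _; rewrite card_ord.
    by rewrite -{1}(expn1 k) leq_pexp2l.
  by rewrite -(ler_nat rat) natrX.
have H1 : cnt s i J S0 <= NN n k * b ^+ t.+1 by rewrite -Ht IH1.
have H2 : \sum_(j in J) cnt s i (J :\ j) S0 <= (NN n k * b ^+ t) *+ t.+1.
  rewrite -Ht -sumr_const; apply: ler_sum => j jJ.
  have Hc : #|J :\ j| = t by move: Ht; rewrite (cardsD1 j J) jJ add1n => -[].
  by move: (IH1 (J :\ j)); rewrite Hc.
apply: le_trans (_ : (1 - t.+1%:R * p) * (NN n k * b ^+ t.+1) + p * ((NN n k * b ^+ t) *+ t.+1) <= _).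
  have -> : cnt s i J S0 + p * (\sum_(i0 in J) cnt s i (J :\ i0) S0 - cnt s i J S0 *+ t.+1)
      = (1 - t.+1%:R * p) * cnt s i J S0 + p * \sum_(i0 in J) cnt s i (J :\ i0) S0.
    by rewrite -mulr_natl; ring.
  apply: lerD; first by apply: ler_wpM2l => //; rewrite subr_ge0.
  by apply: ler_wpM2l.
apply: le_trans (_ : NN n k * (b ^+ t.+1 + t.+1%:R * b ^+ t * (p * (1 - b))) <= _).
  rewrite -[_ *+ t.+1]mulr_natr le_eqVlt; apply/orP; left; apply/eqP; rewrite !exprS; ring.
apply: ler_wpM2l; first exact: ltW.
apply: binom2 => //; apply: mulr_ge0 => //; rewrite subr_ge0 //.
Qed.

Definition domBE n (E : {set {set 'I_n}}) (i : 'I_n) : pred ({set 'I_n} * 'I_n) :=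
  [pred x | x.1 \in back_edges E i].

Lemma phis_mix n k E (i : 'I_n) (w g : lkp n k) :
  greedy_phis E (mixf (domBE E i) w g) i = greedy_phis E w i.
Proof.
apply: (phis_dep (i := i)) => // v e u vi He; rewrite ffunE /domBE /=.
case: ifP => // He'; exfalso.
move: He'; rewrite /back_edges inE => /andP [_ /andP [ie /subsetP sub]].
move: (sub i ie); rewrite inE => iv.
move: He; rewrite /back_edges inE => /andP [_ /andP [_ /subsetP sub']].
by move: (sub' i ie); rewrite inE => iv'; move: (leq_ltn_trans iv' vi); rewrite ltnn.
Qed.

Lemma blocked_ball n k E (g : lkp n k) s (i : 'I_n) (j : 'I_k) :
  blocked E g s i j = [exists e in back_edges E i, ball s i e g == Some j].
Proof.
rewrite /blocked /ball; apply: eq_existsb => e; congr andb.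
case: ifP => H.
  rewrite (inj_eq (@Some_inj _)) -val_eqE /=; apply/andP/idP => [[]//|->]; split => //; exact: H.
have -> : (None == Some j) = false by [].
by rewrite andbF.
Qed.

Lemma eventY_mix n k E (i : 'I_n) (j : 'I_k) (w g : lkp n k) :
  (mixf (domBE E i) w g \in eventY E i j) =
  (val i != 0%N) && [exists e in back_edges E i, ball (greedy_phis E w i) i e g == Some j].
Proof.
rewrite /eventY /greedyL !inE phis_mix /inL ltn_ord /= negb_or negbK.
rewrite -blocked_ball; congr andb; apply: blocked_dep => e u He.
by rewrite ffunE /domBE /= He.
Qed.

Lemma card_sum (T : finType) (A : {set T}) : #|A|%:R = \sum_w (w \in A)%:R :> rat.
Proof.
rewrite -sum1_card natr_sum big_mkcond /=; apply: eq_bigr => w _; by case: (w \in A).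
Qed.

Lemma Pr_ge0 n k (A : {set lkp n k}) : 0 <= Pr A.
Proof. by rewrite /Pr divr_ge0 ?ler0n. Qed.

Lemma Pr_le1 n k (A : {set lkp n k}) : Pr A <= 1.
Proof.
rewrite /Pr; case: (posnP #|[set: lkp n k]|) => [->|h]; first by rewrite invr0 mulr0.
by rewrite ler_pdivrMr ?ltr0n // mul1r ler_nat subset_leq_card // subsetT.
Qed.

Lemma Pr_NN n k (A : {set lkp n k}) : Pr A = #|A|%:R / NN n k.
Proof. by rewrite /Pr /NN cardsT. Qed.

Lemma PrY n k E (i : 'I_n) (J : {set 'I_k}) : (0 < k)%N -> val i != 0%N ->
  NN n k * NN n k * Pr (\bigcap_(j in J) eventY E i j) =
  \sum_(w : lkp n k) cnt (greedy_phis E w i) i J (back_edges E i).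
Proof.
move=> k0 i0; have N0 := lt0r_neq0 (NN_gt0 n k0).
rewrite Pr_NN.
have -> : forall x : rat, NN n k * NN n k * (x / NN n k) = NN n k * x.
  by move=> x; field.
rewrite card_sum.
rewrite /NN -(mix_sum (domBE E i) (fun w : lkp n k => (w \in \bigcap_(j in J) eventY E i j)%:R)).
apply: eq_bigr => w _; rewrite /cnt; apply: eq_bigr => g _.
congr (nat_of_bool _)%:R.
apply/bigcapP/forallP => H j.
  by apply/implyP => jJ; move: (H j jJ); rewrite eventY_mix i0.
by move=> jJ; move: (H j); rewrite jJ /= eventY_mix i0.
Qed.

Lemma key n r k E (i : 'I_n) : uniform r E -> (0 < k)%N -> val i != 0%N ->
  (forall J : {set 'I_k}, Pr (\bigcap_(j in J) eventY E i j) <=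
       (1 - (1 - 1 / (k%:R) ^+ r) ^+ #|back_edges E i|) ^+ #|J|) /\
  (forall j : 'I_k, Pr (eventY E i j) = 1 - (1 - 1 / (k%:R) ^+ r) ^+ #|back_edges E i|).
Proof.
move=> Hu k0 i0.
set b := 1 - _.
have N0 := NN_gt0 n k0.
have C : forall w : lkp n k, forall S : {set {set 'I_n}}, S \subset back_edges E i ->
  (forall J : {set 'I_k}, cnt (greedy_phis E w i) i J S <= NN n k * (1 - (1 - 1 / (k%:R) ^+ r) ^+ #|S|) ^+ #|J|) /\
  (forall j : 'I_k, cnt (greedy_phis E w i) i [set j] S = NN n k * (1 - (1 - 1 / (k%:R) ^+ r) ^+ #|S|)).
  move=> w; apply: core => // e; rewrite /back_edges inE => /andP [eE /andP [ie /subsetP sub]].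
  split => // [|u ue ui]; first exact: Hu.
  apply: phis_lt => //; move: (sub u ue); rewrite inE leq_eqVlt => /orP [/eqP uie|//].
  by move: ui; rewrite (ord_inj uie) eqxx.
have NNs : forall c : rat, \sum_(w : lkp n k) c = NN n k * c.
  by move=> c; rewrite sumr_const /NN mulr_natl.
have NN2 : 0 < NN n k * NN n k by rewrite mulr_gt0.
split.
  move=> J; rewrite -(ler_pM2l NN2) (PrY _ _ k0 i0).
  rewrite -mulrA -NNs; apply: ler_sum => w _; exact: (C w _ (subxx _)).1.
move=> j; apply: (mulfI (lt0r_neq0 NN2)).
have -> : eventY E i j = \bigcap_(j' in [set j]) eventY E i j' by rewrite big_set1.
rewrite (PrY _ _ k0 i0) -mulrA -NNs.
by apply: eq_bigr => w _; rewrite (C w _ (subxx _)).2.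
Qed.

Lemma Y0 n k E (i : 'I_n) (j : 'I_k) : val i = 0%N -> eventY E i j = set0.
Proof.
move=> i0; apply/setP => w; rewrite /eventY /greedyL !inE /inL ltn_ord i0 /=.
by [].
Qed.

Lemma PrC n k (A : {set lkp n k}) : (0 < k)%N -> Pr (~: A) = 1 - Pr A.
Proof.
move=> k0; have N0 := lt0r_neq0 (NN_gt0 n k0).
rewrite !Pr_NN; apply: (mulIf N0); rewrite mulrBl !mulfVK // mul1r.
apply/eqP; rewrite eq_sym subr_eq -natrD addnC cardsC /NN.
by [].
Qed.

Theorem lemma3p5 (n r d k : nat) (E : {set {set 'I_n}}) :
  uniform r E -> degenerate_order d E ->
  (forall (i : 'I_n) (j : 'I_k),
      ((1 - 1 / (k%:R ^+ r)) ^+ d <= Pr (eventX E i j))%R) /\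
  (forall (i : 'I_n) (J : {set 'I_k}),
      (Pr (\bigcap_(j in J) eventY E i j) <= \prod_(j in J) Pr (eventY E i j))%R).
Proof.
move=> Hu Hd; split.
  move=> i j.
  have k0 : (0 < k)%N by apply: leq_ltn_trans (ltn_ord j).
  have kr0 : 0 < (k%:R : rat) ^+ r by rewrite exprn_gt0 // ltr0n.
  have p0 : 0 <= 1 / (k%:R : rat) ^+ r by rewrite divr_ge0 // ltW.
  have p1 : 1 / (k%:R : rat) ^+ r <= 1 by rewrite ler_pdivrMr // mul1r exprn_ege1 // ler1n.
  have q0 : 0 <= 1 - 1 / (k%:R : rat) ^+ r by rewrite subr_ge0.
  have q1 : 1 - 1 / (k%:R : rat) ^+ r <= 1 by rewrite lerBlDr lerDl.
  have -> : eventX E i j = ~: eventY E i j.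
    by apply/setP => w; rewrite /eventX /eventY !inE negbK.
  rewrite PrC //.
  case: (eqVneq (val i) 0%N) => [i0|i0].
    rewrite Y0 // Pr_NN cards0 mul0r subr0.
    exact: exprn_ile1.
  rewrite (key Hu k0 i0).2.
  have -> : forall x : rat, 1 - (1 - x) = x by move=> x; ring.
  exact: ler_wiXn2l.
move=> i J.
case: (eqVneq J set0) => [->|J0].
  by rewrite !big_set0 Pr_le1.
have [j0 j0J] := set0Pn _ J0.
have k0 : (0 < k)%N by apply: leq_ltn_trans (ltn_ord j0).
case: (eqVneq (val i) 0%N) => [i0|i0].
  have -> : \bigcap_(j in J) eventY E i j = set0.
    apply/setP => w; rewrite in_set0; apply/bigcapP => H.
    by move: (H j0 j0J); rewrite Y0 // in_set0.
  by rewrite Pr_NN cards0 mul0r prodr_ge0 // => j _; apply: Pr_ge0.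
have [K1 K2] := key Hu k0 i0.
apply: le_trans (K1 J) _.
by rewrite (eq_bigr _ (fun j _ => K2 j)) prodr_const.
Qed.
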